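(* Let $G$ be a finite simple graph and let $\mathcal{V}$ be a maximum-cardinality collection of pairwise edge-disjoint triangles of $G$. Then for every $\psi\in\mathcal{V}$: (1) $|base(\psi)| \neq 2$; (2) if $|base(\psi)|=3$, then exactly three triangles are singly-attached to $\psi$, and all of them share a common anchoring vertex $a$; in this case $V(\psi)\cup\{a\}$ induces a $K_4$.
   Context: Triangles are sets of three pairwise adjacent vertices, identified with their edge sets. Triangles in $\mathcal{V}$ are solution triangles. A triangle $t\notin\mathcal{V}$ shares at most one edge with each $\psi\in\mathcal{V}$. If $t\notin\mathcal{V}$ shares an edge with exactly one triangle $\psi\in\mathcal{V}$, $t$ is singly-attached to $\psi$; the edge in $E(t)\cap E(\psi)$ is called a base-edge, and the vertex of $V(t)\setminus V(\psi)$ is the anchoring vertex of $t$. For $\psi\in\mathcal{V}$, $base(\psi)$ denotes the set of edges of $\psi$ that are base-edges (i.e., that lie in some triangle singly-attached to $\psi$). *)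

(* Defs.v *)
(* A finite simple graph is a finType T of vertices with a
   symmetric irreflexive adjacency relation e : rel T. Vertex sets are {set T}. *)
From mathcomp Require Import all_boot.
Set Implicit Arguments. Unset Strict Implicit. Unset Printing Implicit Defensive.

Section Triangles.
Variables (T : finType) (e : rel T).

Definition clique (S : {set T}) : bool :=
  [forall x in S, forall y in S, (x != y) ==> e x y].

Definition triangle (t : {set T}) : bool := (#|t| == 3) && clique t.

Definition edges (t : {set T}) : {set {set T}} :=
  [set p : {set T} | (p \subset t) && (#|p| == 2)].

Definition share_edge (t u : {set T}) : bool := edges t :&: edges u != set0.

Definition edge_disjoint_packing (V : {set {set T}}) : bool :=
  [forall t in V, triangle t] &&
  [forall t in V, forall u in V, (t != u) ==> ~~ share_edge t u].

Definition maximum_packing (V : {set {set T}}) : Prop :=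
  edge_disjoint_packing V /\
  forall W : {set {set T}}, edge_disjoint_packing W -> #|W| <= #|V|.

Definition singly_attached (V : {set {set T}}) (t psi : {set T}) : bool :=
  [&& triangle t, t \notin V, psi \in V, share_edge t psi &
      [forall u in V, share_edge t u ==> (u == psi)]].

Definition base (V : {set {set T}}) (psi : {set T}) : {set {set T}} :=
  [set f in edges psi | [exists t, singly_attached V t psi && (f \in edges t)]].

Definition anchored_at (t psi : {set T}) (a : T) : bool := t :\: psi == [set a].

End Triangles.

(* Main.v *)
Require Import Defs.
From mathcomp Require Import all_boot.
Set Implicit Arguments. Unset Strict Implicit. Unset Printing Implicit Defensive.

Section S.
Variables (T : finType) (e : rel T).
Hypotheses (e_sym : symmetric e) (e_irr : irreflexive e).

Lemma cliqueP (S : {set T}) x y : clique e S -> x \in S -> y \in S -> x != y -> e x y.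
Proof. by move=> /forallP/(_ x)/implyP H xS yS; move/forallP/(_ y)/implyP: (H xS) => H2; move/implyP: (H2 yS). Qed.

Lemma cliqueI (S : {set T}) : (forall x y, x \in S -> y \in S -> x != y -> e x y) -> clique e S.
Proof. move=> H; apply/forallP=> x; apply/implyP=> xS; apply/forallP=> y; apply/implyP=> yS; apply/implyP; exact: H. Qed.

Lemma shareE (t u : {set T}) : share_edge t u = (1 < #|t :&: u|).
Proof.
rewrite /share_edge; apply/set0Pn/card_gt1P.
- case=> p; rewrite !inE => /andP[/andP[pt p2] /andP[pu _]].
  have : 1 < #|p| by rewrite (eqP p2).
  move/card_gt1P=> [x [y [xp yp xy]]]; exists x, y; split=> //; rewrite inE.
    by rewrite (subsetP pt _ xp) (subsetP pu _ xp).
  by rewrite (subsetP pt _ yp) (subsetP pu _ yp).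
- case=> x [y [xt yt xy]]; exists [set x; y]; move: xt yt; rewrite !inE cards2 xy /= => /andP[xt xu] /andP[yt yu].
  by rewrite !subUset !sub1set xt xu yt yu.
Qed.

Lemma share_sym (t u : {set T}) : share_edge t u = share_edge u t.
Proof. by rewrite !shareE setIC. Qed.


Variables (V : {set {set T}}) (HV : maximum_packing e V) (psi : {set T}) (Hpsi : psi \in V).

Lemma triV u : u \in V -> triangle e u.
Proof. by case: HV => /andP[/forallP H _] _ uV; move/implyP: (H u); apply. Qed.

Lemma disjV u u' : u \in V -> u' \in V -> u != u' -> ~~ share_edge u u'.
Proof.
case: HV => /andP[_ /forallP H] _ uV u'V.
by move/implyP: (H u) => /(_ uV)/forallP/(_ u')/implyP/(_ u'V)/implyP.
Qed.

Lemma SAP t : singly_attached e V t psi ->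
  [/\ triangle e t, t \notin V, share_edge t psi &
      forall u, u \in V -> share_edge t u -> u = psi].
Proof.
case/and5P=> tt tV _ sh /forallP H; split=> // u uV shu.
by move/implyP: (H u) => /(_ uV)/implyP/(_ shu)/eqP.
Qed.

Lemma tri3 t : triangle e t -> #|t| = 3.
Proof. by case/andP=> /eqP. Qed.

Lemma triC t : triangle e t -> clique e t.
Proof. by case/andP. Qed.

Lemma exchange t1 t2 : singly_attached e V t1 psi -> singly_attached e V t2 psi ->
  t1 != t2 -> ~~ share_edge t1 t2 -> False.
Proof.
move=> /SAP[tr1 nV1 _ H1] /SAP[tr2 nV2 _ H2] t12 ns12.
set W := t1 |: (t2 |: (V :\ psi)).
have inW x : x \in W -> [\/ x = t1, x = t2 | x \in V /\ x != psi].
  rewrite !inE => /orP[/eqP->|/orP[/eqP->|/andP[xp xV]]]; [exact: Or31|exact: Or32|exact: Or33].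
have ns1 x : x \in W -> x != t1 -> ~~ share_edge t1 x.
  case/inW=> [->|->|[xV xp]] xn //; first by rewrite eqxx in xn.
  by apply/negP=> /(H1 _ xV) /eqP; rewrite (negbTE xp).
have ns2 x : x \in W -> x != t2 -> ~~ share_edge t2 x.
  case/inW=> [->|->|[xV xp]] xn; last first.
      by apply/negP=> /(H2 _ xV) /eqP; rewrite (negbTE xp).
    by rewrite eqxx in xn.
  by rewrite share_sym.
have pW : edge_disjoint_packing e W.
  apply/andP; split.
    apply/forallP=> x; apply/implyP=> /inW[->|->|[xV _]] //; exact: triV.
  apply/forallP=> x; apply/implyP=> xW; apply/forallP=> y; apply/implyP=> yW; apply/implyP=> xy.
  case: (inW _ xW)=> [xe|xe|[xV xp]].
  - by rewrite xe; apply: ns1 => //; rewrite -xe eq_sym.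
  - by rewrite xe; apply: ns2 => //; rewrite -xe eq_sym.
  case: (inW _ yW)=> [ye|ye|[yV yp]].
  - by rewrite ye share_sym; apply: ns1 => //; rewrite -ye.
  - by rewrite ye share_sym; apply: ns2 => //; rewrite -ye.
  exact: disjV.
case: HV => _ /(_ W pW).
rewrite /W cardsU1 cardsU1 in_setU1 (negbTE t12) !inE (negbTE nV1) (negbTE nV2) !andbF /=.
by rewrite (cardsD1 psi V) Hpsi add1n ltnn.
Qed.


Definition Tr v a : {set T} := (psi :\ v) :|: [set a].

Lemma inTr x v a : (x \in Tr v a) = ((x != v) && (x \in psi)) || (x == a).
Proof. by rewrite !inE. Qed.

Lemma psi3 : #|psi| = 3.
Proof. exact: tri3 (triV Hpsi). Qed.

Lemma SAform t : singly_attached e V t psi ->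
  exists v a, [/\ v \in psi, a \notin psi & t = Tr v a].
Proof.
move=> SA; case/SAP: (SA) => tr nV sh _.
have t3 := tri3 tr.
have c2 : #|t :&: psi| = 2.
  move: sh; rewrite shareE => c1.
  have : #|t :&: psi| <= 3 by rewrite -t3 subset_leq_card // subsetIl.
  rewrite leq_eqVlt ltnS => /orP[/eqP c3|]; last by rewrite leq_eqVlt ltnNge c1 orbF => /eqP.
  have e1 : t :&: psi = t by apply/eqP; rewrite eqEcard subsetIl t3 c3.
  have e2 : t :&: psi = psi by apply/eqP; rewrite eqEcard subsetIr psi3 c3.
  by move: nV; rewrite -e1 e2 Hpsi.
have := cardsID psi t; rewrite c2 t3 => /(congr1 (subn^~ 2)); rewrite addKn /= => /eqP/cards1P[a Ha].
have := cardsID t psi; rewrite setIC c2 psi3 => /(congr1 (subn^~ 2)); rewrite addKn /= => /eqP/cards1P[v Hv].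
move/setP: Ha => Ha'; move/setP: Hv => Hv'.
have vpsi : v \in psi by move: (Hv' v); rewrite !inE eqxx => /andP[].
have apsi : a \notin psi by move: (Ha' a); rewrite !inE eqxx => /andP[].
exists v, a; split=> //; apply/setP=> w.
move: (Ha' w) (Hv' w); rewrite !inE.
by case: (w \in t); case: (w \in psi) => /= <- <-.
Qed.

Lemma TrIpsi v a : a \notin psi -> Tr v a :&: psi = psi :\ v.
Proof.
move=> ap; apply/setP=> x; rewrite !inE.
case: (eqVneq x a) => [->|xa]; last by rewrite orbF -andbA andbb.
by rewrite (negbTE ap) !andbF.
Qed.

Lemma cardTr v a : v \in psi -> a \notin psi -> #|Tr v a| = 3.
Proof.
move=> vp ap; rewrite /Tr setUC cardsU1 !inE (negbTE ap) andbF /=.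
by move: psi3; rewrite (cardsD1 v) vp add1n => [[->]].
Qed.

Lemma sameanchor v w a b : v \in psi -> w \in psi -> v != w -> a \notin psi -> b \notin psi ->
  singly_attached e V (Tr v a) psi -> singly_attached e V (Tr w b) psi -> a = b.
Proof.
move=> vp wp vw ap bp S1 S2; apply/eqP/negP=> ab.
apply: (exchange S1 S2).
  apply/negP=> /eqP E; have : w \in Tr v a by rewrite inTr eq_sym vw wp.
  by rewrite E inTr eqxx /= => /eqP wb; rewrite -wb wp in bp.
rewrite shareE -leqNgt.
have c1 : #|psi :\ v :\ w| = 1.
  move: psi3; rewrite (cardsD1 v) vp (cardsD1 w (psi :\ v)) !inE eq_sym vw wp.
  by case.
rewrite -c1 subset_leq_card //; apply/subsetP=> x; rewrite inE !inTr !inE.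
case: (eqVneq x a)=> [->|xa] /=.
  by rewrite (negbTE ap) !andbF /= (negbTE (introN idP ab)).
case: (eqVneq x b)=> [->|xb] /=.
  by rewrite (negbTE bp) !andbF.
by rewrite !orbF => /andP[/andP[-> ->] /andP[-> _]].
Qed.


Section Ext.
Variables (v w a : T).
Hypotheses (vp : v \in psi) (wp : w \in psi) (vw : v != w) (ap : a \notin psi)
  (S1 : singly_attached e V (Tr v a) psi) (S2 : singly_attached e V (Tr w a) psi).

Lemma pick q : q \in psi -> exists v', [/\ v' \in psi, singly_attached e V (Tr v' a) psi & q \in Tr v' a].
Proof.
move=> qp; case: (eqVneq q v) => [->|qv].
  by exists w; split=> //; rewrite inTr vp vw.
by exists v; split=> //; rewrite inTr qv qp.
Qed.

Lemma aTr v' : a \in Tr v' a.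
Proof. by rewrite inTr eqxx orbT. Qed.

Lemma qa q : q \in psi -> q != a.
Proof. by move=> qp; apply: contraNneq ap => <-. Qed.

Lemma adj q : q \in psi -> e a q.
Proof.
move=> qp; case: (pick qp) => v' [v'p S qT].
case/SAP: S => tr _ _ _.
by apply: (cliqueP (triC tr)) => //; [exact: aTr | rewrite eq_sym qa].
Qed.

Lemma key2 q (U : {set T}) : q \in psi -> q \in U -> a \in U -> U \in V -> U = psi.
Proof.
move=> qp qU aU UV; case: (pick qp) => v' [v'p S qT].
case/SAP: S => _ _ _ H; apply: H => //.
rewrite shareE; apply/card_gt1P; exists a, q; split; [by rewrite in_setI aTr aU | by rewrite in_setI qT qU | by rewrite eq_sym qa].
Qed.

Lemma extend u : u \in psi -> singly_attached e V (Tr u a) psi.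
Proof.
move=> up.
have shp : share_edge (Tr u a) psi.
  by rewrite shareE TrIpsi // -(ltn_add2l 1) add1n -psi3 (cardsD1 u psi) up.
have np : Tr u a != psi by apply/negP=> /eqP E; move: (aTr u); rewrite E (negbTE ap).
apply/and5P; split=> //.
- apply/andP; split; first by rewrite cardTr.
  apply: cliqueI => x y; rewrite !inTr => /orP[/andP[_ xp]|/eqP->] /orP[/andP[_ yp]|/eqP->] xy.
  + exact: (cliqueP (triC (triV Hpsi))).
  + by rewrite e_sym; apply: adj.
  + exact: adj.
  + by rewrite eqxx in xy.
- apply/negP=> H; move: (disjV H Hpsi np); by rewrite shp.
- apply/forallP=> U; apply/implyP=> UV; apply/implyP=> sh.
  case: (eqVneq U psi) => // Un; exfalso.
  move: sh; rewrite shareE => /card_gt1P[p [q [pI qI pq]]].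
  move: pI qI; rewrite !in_setI => /andP[pT pU] /andP[qT qU].
  move: pT qT; rewrite !inTr.
  case/orP=> [/andP[_ pp]|/eqP pa]; case/orP=> [/andP[_ qp]|/eqP qa'].
  + have : share_edge psi U.
      by rewrite shareE; apply/card_gt1P; exists p, q; rewrite !inE pp pU qp qU.
    by have := disjV Hpsi UV; rewrite eq_sym Un => /(_ isT) /negbTE ->.
  + by move: (key2 pp pU); rewrite -qa' => /(_ qU UV); move/eqP: Un.
  + by move: (key2 qp qU); rewrite -pa => /(_ pU UV); move/eqP: Un.
  + by move: pq; rewrite pa qa' eqxx.
Qed.

End Ext.


Lemma cardD1psi v : v \in psi -> #|psi :\ v| = 2.
Proof. by move=> vp; move: psi3; rewrite (cardsD1 v) vp add1n => [[]]. Qed.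

Lemma baseE f : f \in base e V psi <->
  exists v a, [/\ v \in psi, a \notin psi, singly_attached e V (Tr v a) psi & f = psi :\ v].
Proof.
split.
  rewrite inE => /andP[]; rewrite inE => /andP[fp /eqP f2] /existsP[t /andP[S]].
  rewrite inE => /andP[ft _].
  case: (SAform S) => v [a [vp ap tE]]; exists v, a; split=> //; first by rewrite -tE.
  apply/eqP; rewrite eqEcard cardD1psi // f2 leqnn andbT -(TrIpsi v ap) -tE.
  by rewrite subsetI ft fp.
case=> v [a [vp ap S ->]]; rewrite inE; apply/andP; split.
  by rewrite inE subsetDl cardD1psi.
by apply/existsP; exists (Tr v a); rewrite S inE subsetUl cardD1psi.
Qed.

Lemma two_base : 1 < #|base e V psi| -> exists v w a,
  [/\ v \in psi, w \in psi, v != w, a \notin psi &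
      singly_attached e V (Tr v a) psi /\ singly_attached e V (Tr w a) psi].
Proof.
case/card_gt1P=> f1 [f2 [/baseE[v [a [vp ap S1 ->]]] /baseE[w [b [wp bp S2 ->]]] ne]].
have vw : v != w by apply: contraNneq ne => ->.
have ab := sameanchor vp wp vw ap bp S1 S2.
by subst b; exists v, w, a.
Qed.

Lemma main : #|base e V psi| != 2 /\
    (#|base e V psi| = 3 ->
       #|[set t | singly_attached e V t psi]| = 3 /\
       exists a : T,
         (forall t, singly_attached e V t psi -> anchored_at t psi a) /\
         a \notin psi /\ clique e (psi :|: [set a])).
Proof.
have inj1 a : a \notin psi -> {in psi &, injective (fun u => Tr u a)}.
  move=> ap u u' up u'p E; case: (eqVneq u u') => // uu'.
  have : u \in Tr u' a by rewrite inTr uu' up.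
  by rewrite -E inTr eqxx /= => /eqP ua; rewrite ua (negbTE ap) in up.
have inj2 : {in psi &, injective (fun u => psi :\ u)}.
  move=> u u' up u'p E; case: (eqVneq u u') => // uu'.
  have : u \in psi :\ u' by rewrite !inE uu' up.
  by rewrite -E !inE eqxx.
have full : 1 < #|base e V psi| -> exists a, [/\ a \notin psi,
    #|base e V psi| = 3,
    #|[set t | singly_attached e V t psi]| = 3,
    (forall t, singly_attached e V t psi -> anchored_at t psi a) &
    clique e (psi :|: [set a])].
  case/two_base=> v [w [a [vp wp vw ap [S1 S2]]]].
  have anch t : singly_attached e V t psi -> exists2 u, u \in psi & t = Tr u a.
    move=> S; case: (SAform S) => v' [a' [v'p a'p tE]]; exists v' => //.
    have S' : singly_attached e V (Tr v' a') psi by rewrite -tE.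
    rewrite tE; congr Tr.
    case: (eqVneq v' v) => [ev|nv].
      by apply: (sameanchor v'p wp _ a'p ap S' S2); rewrite ev.
    exact: (sameanchor v'p vp nv a'p ap S' S1).
  exists a; split=> //.
  - have -> : base e V psi = [set psi :\ u | u in psi].
      apply/setP=> f; apply/idP/idP.
        by case/baseE=> u [b [up bp S ->]]; apply: imset_f.
      case/imsetP=> u up ->; apply/baseE; exists u, a; split=> //.
      exact: (extend vp wp vw ap S1 S2).
    by rewrite card_in_imset // psi3.
  - have -> : [set t | singly_attached e V t psi] = [set Tr u a | u in psi].
      apply/setP=> t; rewrite inE; apply/idP/idP.
        by case/anch=> u up ->; apply: imset_f.
      case/imsetP=> u up ->; exact: (extend vp wp vw ap S1 S2).
    by rewrite card_in_imset ?psi3 //; exact: inj1.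
  - move=> t /anch[u up ->]; apply/eqP/setP=> x; rewrite !inE.
    case: (eqVneq x a) => [->|xa]; first by rewrite ?ap ?eqxx orbT.
    by rewrite orbF; case: (x \in psi); rewrite ?andbF.
  - apply: cliqueI=> x y; rewrite !inE => /orP[xp|/eqP->] /orP[yp|/eqP->] xy.
    + exact: (cliqueP (triC (triV Hpsi))).
    + by rewrite e_sym; apply: (adj vp wp vw ap S1 S2).
    + exact: (adj vp wp vw ap S1 S2).
    + by rewrite eqxx in xy.
split.
  apply/negP=> /eqP H2; case: full; first by rewrite H2.
  by move=> a [_ ]; rewrite H2.
move=> H3; case: full; first by rewrite H3.
by move=> a [ap _ c3 H cl]; split=> //; exists a.
Qed.

End S.

Theorem proposition8 (T : finType) (e : rel T)
  (e_sym : symmetric e) (e_irr : irreflexive e)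
  (V : {set {set T}}) (HV : maximum_packing e V) :
  forall psi, psi \in V ->
    #|base e V psi| != 2 /\
    (#|base e V psi| = 3 ->
       #|[set t | singly_attached e V t psi]| = 3 /\
       exists a : T,
         (forall t, singly_attached e V t psi -> anchored_at t psi a) /\
         a \notin psi /\ clique e (psi :|: [set a])).
Proof. by move=> psi Hpsi; apply: main. Qed.
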